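(* Let $s_0\ge1$ be an integer and let $f=(f_1,f_2)$ and $g=(g_1,g_2)$ be smooth vector fields on $\mathbb{T}^2$. Then \begin{align*} \Big|\int_{\mathbb{T}^2}\partial^{s_0}(f\cdot\nabla g)\cdot\partial^{s_0}g\,dx\Big| \lesssim\;&\Big(\|\nabla f_1\|_{H^{[\frac{s_0}{2}]+1}}\|\partial_1g\|_{H^{s_0-1}}+\|\nabla f_2\|_{H^{[\frac{s_0}{2}]+1}}\|\partial_2g\|_{H^{s_0-1}}\Big)\|g\|_{\dot H^{s_0}}\\ &+\Big(\|\nabla f_1\|_{H^{s_0-1}}\|\partial_1g\|_{H^{[\frac{s_0}{2}]+2}}+\|\nabla f_2\|_{H^{s_0-1}}\|\partial_2g\|_{H^{[\frac{s_0}{2}]+2}}\Big)\|g\|_{\dot H^{s_0}}\\ &+\|\nabla\cdot f\|_{H^2}\|g\|_{\dot H^{s_0}}^2. \end{align*}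
   Context: $\mathbb{T}^2=[-\pi,\pi]^2$ is the periodic domain. $\partial^{s_0}$ denotes any partial derivative $\partial_1^{\alpha_1}\partial_2^{\alpha_2}$ with $\alpha_1+\alpha_2=s_0$, applied componentwise; $f\cdot\nabla g=f_1\partial_1g+f_2\partial_2g$. $[\cdot]$ is the integer part and $\dot H^{s_0}$ the homogeneous Sobolev seminorm. $A\lesssim B$ means $A\le CB$ with a constant $C$ depending only on $s_0$. *)

(* Defs.v *)
From Stdlib Require Import Reals.
From Coquelicot Require Import Coquelicot.
Open Scope R_scope.

Definition fn2 := R -> R -> R.

Definition pd1 (u : fn2) : fn2 := fun x y => Derive (fun t => u t y) x.
Definition pd2 (u : fn2) : fn2 := fun x y => Derive (fun t => u x t) y.

Definition pdn (a b : nat) (u : fn2) : fn2 := Nat.iter a pd1 (Nat.iter b pd2 u).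

Definition smooth2 (u : fn2) : Prop :=
  forall (a b : nat) (x y : R),
    ex_derive (fun t => pdn a b u t y) x /\
    ex_derive (fun t => pdn a b u x t) y /\
    continuous (fun p : R * R => pdn a b u (fst p) (snd p)) (x, y).

(* 2pi-periodic in each variable: a function on T^2 = [-pi,pi]^2. *)
Definition periodic2 (u : fn2) : Prop :=
  forall x y, u (x + 2 * PI) y = u x y /\ u x (y + 2 * PI) = u x y.

Definition smooth_T2 (u : fn2) : Prop := smooth2 u /\ periodic2 u.

Definition intT2 (h : fn2) : R :=
  RInt (fun x => RInt (fun y => h x y) (- PI) PI) (- PI) PI.

Definition L2sq (u : fn2) : R := intT2 (fun x y => u x y ^ 2).

Definition Hsq (k : nat) (u : fn2) : R :=
  sum_f_R0 (fun a => sum_f_R0 (fun b => L2sq (pdn a b u)) (k - a)) k.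

Definition Hdotsq (k : nat) (u : fn2) : R :=
  sum_f_R0 (fun a => L2sq (pdn a (k - a) u)) k.

Definition Hnorm2 (k : nat) (u v : fn2) : R := sqrt (Hsq k u + Hsq k v).
Definition Hnorm1 (k : nat) (u : fn2) : R := sqrt (Hsq k u).
Definition Hdotnorm2 (k : nat) (u v : fn2) : R := sqrt (Hdotsq k u + Hdotsq k v).

Definition adv (f1 f2 h : fn2) : fn2 :=
  fun x y => f1 x y * pd1 h x y + f2 x y * pd2 h x y.

Definition trilin (a b : nat) (f1 f2 g1 g2 : fn2) : R :=
  intT2 (fun x y =>
    pdn a b (adv f1 f2 g1) x y * pdn a b g1 x y +
    pdn a b (adv f1 f2 g2) x y * pdn a b g2 x y).

Definition divf (f1 f2 : fn2) : fn2 := fun x y => pd1 f1 x y + pd2 f2 x y.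

(* Main.v *)
Require Import Defs.
From Stdlib Require Import Reals Lra Lia Psatz FunctionalExtensionality List Arith.
From Coquelicot Require Import Coquelicot.
Import ListNotations.
Open Scope R_scope.

Lemma fn2_ext (u v : fn2) : (forall x y, u x y = v x y) -> u = v.
Proof. intros H; apply functional_extensionality; intro x; apply functional_extensionality; intro y; apply H. Qed.

Lemma cont2_y (w : fn2) x y :
  continuous (fun p : R * R => w (fst p) (snd p)) (x, y) -> continuous (fun t => w x t) y.
Proof.
  intros H. apply (continuous_comp_2 (fun _ : R => x) (fun t => t) w).
  apply continuous_const. apply continuous_id. exact H.
Qed.

Lemma cont2_x (w : fn2) x y :
  continuous (fun p : R * R => w (fst p) (snd p)) (x, y) -> continuous (fun t => w t y) x.
Proof.
  intros H. apply (continuous_comp_2 (fun t => t) (fun _ : R => y) w).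
  apply continuous_id. apply continuous_const. exact H.
Qed.

Lemma cont2_2d (w : fn2) x y :
  continuous (fun p : R * R => w (fst p) (snd p)) (x, y) -> continuity_2d_pt w x y.
Proof. intros H. apply continuity_2d_pt_filterlim. exact H. Qed.

Lemma pdn_S1 a b u : pdn (S a) b u = pd1 (pdn a b u).
Proof. reflexivity. Qed.

Lemma pdn_0S b u : pdn 0 (S b) u = pd2 (pdn 0 b u).
Proof. reflexivity. Qed.

Lemma pdn_00 u : pdn 0 0 u = u.
Proof. reflexivity. Qed.

Lemma Derive_shift (f : R -> R) x c : (forall t, f (t + c) = f t) -> Derive f (x + c) = Derive f x.
Proof.
  intros H. unfold Derive. f_equal. apply Lim_ext. intro h.
  replace (x + c + h) with ((x + h) + c) by ring. rewrite !H. reflexivity.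
Qed.

Lemma periodic_pd1 u : periodic2 u -> periodic2 (pd1 u).
Proof.
  intros H x y. unfold pd1. split.
  - apply Derive_shift. intro t. apply (H t y).
  - apply Derive_ext. intro t. apply (H t y).
Qed.

Lemma periodic_pd2 u : periodic2 u -> periodic2 (pd2 u).
Proof.
  intros H x y. unfold pd2. split.
  - apply Derive_ext. intro t. apply (H x t).
  - apply Derive_shift. intro t. apply (H x t).
Qed.

Lemma periodic_pdn a b u : periodic2 u -> periodic2 (pdn a b u).
Proof.
  intros H. unfold pdn. induction a; simpl.
  - induction b; simpl; auto. apply periodic_pd2; auto.
  - apply periodic_pd1; auto.
Qed.

Lemma sm_dx u a b x y : smooth2 u -> ex_derive (fun t => pdn a b u t y) x.
Proof. intros H; apply (H a b x y). Qed.
Lemma sm_dy u a b x y : smooth2 u -> ex_derive (fun t => pdn a b u x t) y.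
Proof. intros H; apply (H a b x y). Qed.
Lemma sm_c u a b x y : smooth2 u -> continuous (fun p : R * R => pdn a b u (fst p) (snd p)) (x, y).
Proof. intros H; apply (H a b x y). Qed.

Lemma ex_RInt_y (w : fn2) x a b :
  (forall x y, continuous (fun p : R * R => w (fst p) (snd p)) (x, y)) ->
  ex_RInt (fun t => w x t) a b.
Proof. intros H. apply (@ex_RInt_continuous R_CompleteNormedModule). intros z _. apply cont2_y. apply H. Qed.

Lemma ex_RInt_x (w : fn2) y a b :
  (forall x y, continuous (fun p : R * R => w (fst p) (snd p)) (x, y)) ->
  ex_RInt (fun t => w t y) a b.
Proof. intros H. apply (@ex_RInt_continuous R_CompleteNormedModule). intros z _. apply cont2_x. apply H. Qed.

Lemma derive_param (w : fn2) a b x :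
  (forall x y, ex_derive (fun t => w t y) x) ->
  (forall x y, continuous (fun p : R * R => w (fst p) (snd p)) (x, y)) ->
  (forall x y, continuous (fun p : R * R => pd1 w (fst p) (snd p)) (x, y)) ->
  is_derive (fun z => RInt (fun t => w z t) a b) x (RInt (fun t => pd1 w x t) a b).
Proof.
  intros Hd Hc Hc1.
  apply (is_derive_RInt_param (fun z t => w z t) a b x).
  - apply filter_forall. intros z t _. apply Hd.
  - intros t _. apply cont2_2d. apply Hc1.
  - apply filter_forall. intros z. apply ex_RInt_y. exact Hc.
Qed.

Lemma commute (v : fn2) x y : smooth2 v -> pd2 (pd1 v) x y = pd1 (pd2 v) x y.
Proof.
  intros Hv.
  set (g := fun t => pd1 (pd2 v) x t).
  assert (Hi : forall z t0, RInt (fun t => pd2 v z t) 0 t0 = v z t0 - v z 0).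
  { intros z t0. unfold pd2.
    apply (RInt_Derive (fun t => v z t) 0 t0).
    - intros t _. apply (sm_dy v 0 0 z t Hv).
    - intros t _. apply (cont2_y (pdn 0 1 v) z t). apply sm_c. exact Hv. }
  assert (Hiii : forall t0, pd1 v x t0 - pd1 v x 0 = RInt g 0 t0).
  { intros t0. unfold pd1 at 1 2.
    rewrite <- Derive_minus by (apply (sm_dx v 0 0 x _ Hv)).
    rewrite (Derive_ext _ (fun z => RInt (fun t => pd2 v z t) 0 t0)) by (intro; rewrite Hi; reflexivity).
    apply is_derive_unique. unfold g.
    apply (derive_param (pd2 v)).
    - intros; apply (sm_dx v 0 1 _ _ Hv).
    - intros; apply (sm_c v 0 1 _ _ Hv).
    - intros; apply (sm_c v 1 1 _ _ Hv). }
  unfold pd2 at 1.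
  rewrite (Derive_ext _ (fun t0 => pd1 v x 0 + RInt g 0 t0)) by (intro t; rewrite <- Hiii; ring).
  apply is_derive_unique.
  assert (HH : is_derive (fun t0 => pd1 v x 0 + RInt g 0 t0) y (0 + g y)).
  { apply (is_derive_plus (fun _ => pd1 v x 0) (fun t0 => RInt g 0 t0)).
    - exact (@is_derive_const R_AbsRing R_NormedModule (pd1 v x 0) y).
    - apply (is_derive_RInt g (fun t0 => RInt g 0 t0) 0 y).
      + apply filter_forall. intro b0. apply (@RInt_correct R_CompleteNormedModule). unfold g; apply (ex_RInt_y (pd1 (pd2 v))).
        intros; apply (sm_c v 1 1 _ _ Hv).
      + unfold g. apply (cont2_y (pdn 1 1 v)). apply sm_c; exact Hv. }
  rewrite Rplus_0_l in HH. exact HH.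
Qed.

Lemma smooth_iter2 v b : smooth2 v -> smooth2 (Nat.iter b pd2 v).
Proof.
  intros Hv a c x y. unfold pdn. rewrite <- Nat.iter_add.
  apply (Hv a (c + b)%nat x y).
Qed.

Lemma iter_pd2_pd1 v b : smooth2 v -> Nat.iter b pd2 (pd1 v) = pd1 (Nat.iter b pd2 v).
Proof.
  intros Hv. induction b as [|b IH]; simpl; auto.
  rewrite IH. apply fn2_ext. intros x y. apply commute. apply smooth_iter2; auto.
Qed.

Lemma smooth_pd1 v : smooth2 v -> smooth2 (pd1 v).
Proof.
  intros Hv a b x y. unfold pdn. rewrite iter_pd2_pd1 by auto.
  rewrite <- Nat.iter_succ_r. apply (Hv (S a) b x y).
Qed.

Lemma smooth_pd2 v : smooth2 v -> smooth2 (pd2 v).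
Proof.
  intros Hv a b x y. unfold pdn. rewrite <- Nat.iter_succ_r. apply (Hv a (S b) x y).
Qed.

Lemma smooth_pdn a b v : smooth2 v -> smooth2 (pdn a b v).
Proof.
  intros Hv. unfold pdn. induction a; simpl.
  - apply smooth_iter2; auto.
  - apply smooth_pd1; auto.
Qed.

Lemma iter_swap d a w : smooth2 w ->
  Nat.iter d pd2 (Nat.iter a pd1 w) = Nat.iter a pd1 (Nat.iter d pd2 w).
Proof.
  intros Hw. induction a as [|a IH]; simpl; auto.
  rewrite iter_pd2_pd1. rewrite IH; auto.
  apply (smooth_pdn a 0 w Hw).
Qed.

Lemma pdn_comp c d a b v : smooth2 v -> pdn c d (pdn a b v) = pdn (c + a) (d + b) v.
Proof.
  intros Hv. unfold pdn at 1. unfold pdn at 1.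
  rewrite iter_swap by (apply smooth_iter2; auto).
  unfold pdn. rewrite !Nat.iter_add. reflexivity.
Qed.

Lemma pdn_pd1 a b v : smooth2 v -> pdn a b (pd1 v) = pdn (S a) b v.
Proof. intros Hv. change (pd1 v) with (pdn 1 0 v). rewrite pdn_comp by auto.
  f_equal; lia. Qed.

Lemma pdn_pd2 a b v : smooth2 v -> pdn a b (pd2 v) = pdn a (S b) v.
Proof. intros Hv. change (pd2 v) with (pdn 0 1 v). rewrite pdn_comp by auto.
  f_equal; lia. Qed.

Definition plus2 (u v : fn2) : fn2 := fun x y => u x y + v x y.
Definition mul2 (u v : fn2) : fn2 := fun x y => u x y * v x y.
Definition scal2 (c : R) (u : fn2) : fn2 := fun x y => c * u x y.

Definition reg (u : fn2) : Prop := forall x y,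
  ex_derive (fun t => u t y) x /\ ex_derive (fun t => u x t) y /\
  continuous (fun p : R * R => u (fst p) (snd p)) (x, y).

Lemma smooth_reg u a b : smooth2 u -> reg (pdn a b u).
Proof. intros H x y. apply H. Qed.

Lemma reg_plus u v : reg u -> reg v -> reg (plus2 u v).
Proof.
  intros Hu Hv x y. destruct (Hu x y) as [H1 [H2 H3]]. destruct (Hv x y) as [K1 [K2 K3]].
  unfold plus2. split; [|split].
  - apply (ex_derive_plus (fun t => u t y) (fun t => v t y)); auto.
  - apply (ex_derive_plus (fun t => u x t) (fun t => v x t)); auto.
  - apply (continuous_plus (fun p : R*R => u (fst p) (snd p)) (fun p : R*R => v (fst p) (snd p))); auto.
Qed.

Lemma reg_mul u v : reg u -> reg v -> reg (mul2 u v).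
Proof.
  intros Hu Hv x y. destruct (Hu x y) as [H1 [H2 H3]]. destruct (Hv x y) as [K1 [K2 K3]].
  unfold mul2. split; [|split].
  - apply (ex_derive_mult (fun t => u t y) (fun t => v t y)); auto.
  - apply (ex_derive_mult (fun t => u x t) (fun t => v x t)); auto.
  - apply (continuous_mult (fun p : R*R => u (fst p) (snd p)) (fun p : R*R => v (fst p) (snd p))); auto.
Qed.

Lemma reg_scal c u : reg u -> reg (scal2 c u).
Proof.
  intros Hu x y. destruct (Hu x y) as [H1 [H2 H3]].
  unfold scal2. split; [|split].
  - apply (ex_derive_scal (fun t => u t y)); auto.
  - apply (ex_derive_scal (fun t => u x t)); auto.
  - apply (continuous_mult (fun _ : R*R => c) (fun p : R*R => u (fst p) (snd p))); auto.
    apply continuous_const.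
Qed.

Lemma reg_zero : reg (fun _ _ => 0).
Proof. intros x y. split; [|split]. apply ex_derive_const. apply ex_derive_const. apply continuous_const. Qed.

Lemma pd1_plus u v : reg u -> reg v -> pd1 (plus2 u v) = plus2 (pd1 u) (pd1 v).
Proof.
  intros Hu Hv. apply fn2_ext; intros x y. unfold pd1, plus2.
  apply (Derive_plus (fun t => u t y) (fun t => v t y) x); [apply (Hu x y) | apply (Hv x y)].
Qed.

Lemma pd2_plus u v : reg u -> reg v -> pd2 (plus2 u v) = plus2 (pd2 u) (pd2 v).
Proof.
  intros Hu Hv. apply fn2_ext; intros x y. unfold pd2, plus2.
  apply (Derive_plus (fun t => u x t) (fun t => v x t) y); [apply (Hu x y) | apply (Hv x y)].
Qed.

Lemma pd1_mul u v : reg u -> reg v -> pd1 (mul2 u v) = plus2 (mul2 (pd1 u) v) (mul2 u (pd1 v)).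
Proof.
  intros Hu Hv. apply fn2_ext; intros x y. unfold pd1, plus2, mul2.
  apply (Derive_mult (fun t => u t y) (fun t => v t y) x); [apply (Hu x y) | apply (Hv x y)].
Qed.

Lemma pd2_mul u v : reg u -> reg v -> pd2 (mul2 u v) = plus2 (mul2 (pd2 u) v) (mul2 u (pd2 v)).
Proof.
  intros Hu Hv. apply fn2_ext; intros x y. unfold pd2, plus2, mul2.
  apply (Derive_mult (fun t => u x t) (fun t => v x t) y); [apply (Hu x y) | apply (Hv x y)].
Qed.

Lemma pd1_scal c u : pd1 (scal2 c u) = scal2 c (pd1 u).
Proof. apply fn2_ext; intros x y. unfold pd1, scal2. apply (Derive_scal (fun t => u t y)). Qed.
Lemma pd2_scal c u : pd2 (scal2 c u) = scal2 c (pd2 u).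
Proof. apply fn2_ext; intros x y. unfold pd2, scal2. apply (Derive_scal (fun t => u x t)). Qed.

Lemma pdn_plus a b u v : smooth2 u -> smooth2 v ->
  pdn a b (plus2 u v) = plus2 (pdn a b u) (pdn a b v).
Proof.
  intros Hu Hv. unfold pdn. induction a as [|a IH]; simpl.
  - induction b as [|b IHb]; simpl; auto.
    rewrite IHb. apply pd2_plus.
    apply (smooth_reg u 0 b Hu). apply (smooth_reg v 0 b Hv).
  - rewrite IH. apply pd1_plus.
    apply (smooth_reg u a b Hu). apply (smooth_reg v a b Hv).
Qed.

Lemma pdn_scal a b c u : pdn a b (scal2 c u) = scal2 c (pdn a b u).
Proof.
  unfold pdn. induction a as [|a IH]; simpl.
  - induction b as [|b IHb]; simpl; auto. rewrite IHb. apply pd2_scal.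
  - rewrite IH. apply pd1_scal.
Qed.

Lemma smooth_plus u v : smooth2 u -> smooth2 v -> smooth2 (plus2 u v).
Proof.
  intros Hu Hv a b x y. rewrite pdn_plus by auto.
  apply reg_plus; apply smooth_reg; auto.
Qed.

Lemma smooth_scal c u : smooth2 u -> smooth2 (scal2 c u).
Proof.
  intros Hu a b x y. rewrite pdn_scal. apply reg_scal; apply smooth_reg; auto.
Qed.

Notation tm := ((nat * nat) * (nat * nat))%type.
Definition term (u v : fn2) (t : tm) : fn2 :=
  mul2 (pdn (fst (fst t)) (snd (fst t)) u) (pdn (fst (snd t)) (snd (snd t)) v).

Fixpoint SumT (u v : fn2) (l : list tm) : fn2 :=
  match l with
  | nil => fun _ _ => 0
  | t :: l' => plus2 (term u v t) (SumT u v l')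
  end.

Definition st1 (t : tm) : list tm :=
  match t with ((p, q), (r, s)) => [((p, q), (S r, s)); ((S p, q), (r, s))] end.
Definition st2 (t : tm) : list tm :=
  match t with ((p, q), (r, s)) => [((p, q), (r, S s)); ((p, S q), (r, s))] end.
Definition step1 (l : list tm) := flat_map st1 l.
Definition step2 (l : list tm) := flat_map st2 l.

Lemma reg_term u v t : smooth2 u -> smooth2 v -> reg (term u v t).
Proof. intros; apply reg_mul; apply smooth_reg; auto. Qed.

Lemma reg_SumT u v l : smooth2 u -> smooth2 v -> reg (SumT u v l).
Proof.
  intros Hu Hv. induction l; simpl. apply reg_zero. apply reg_plus; auto. apply reg_term; auto.
Qed.

Lemma SumT_app u v l1 l2 : SumT u v (l1 ++ l2) = plus2 (SumT u v l1) (SumT u v l2).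
Proof.
  induction l1; simpl; apply fn2_ext; intros x y; unfold plus2.
  - ring.
  - rewrite IHl1. unfold plus2. ring.
Qed.

Lemma pd1_SumT u v l : smooth2 u -> smooth2 v -> pd1 (SumT u v l) = SumT u v (step1 l).
Proof.
  intros Hu Hv. induction l as [|t l IH].
  - apply fn2_ext; intros x y. unfold pd1. change (Derive (fun _ => 0) x = 0). apply Derive_const.
  - change (SumT u v (t :: l)) with (plus2 (term u v t) (SumT u v l)).
    rewrite (pd1_plus (term u v t) (SumT u v l) (reg_term u v t Hu Hv) (reg_SumT u v l Hu Hv)).
    rewrite IH. destruct t as [[p q] [r s]].
    change (step1 (((p,q),(r,s)) :: l)) with ([((p, q), (S r, s)); ((S p, q), (r, s))] ++ step1 l).
    rewrite SumT_app.
    change (term u v ((p,q),(r,s))) with (mul2 (pdn p q u) (pdn r s v)).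
    rewrite pd1_mul by (apply smooth_reg; auto).
    change (pd1 (pdn p q u)) with (pdn (S p) q u).
    change (pd1 (pdn r s v)) with (pdn (S r) s v).
    apply fn2_ext; intros x y. cbv [plus2 mul2 SumT term fst snd]. ring.
Qed.

Lemma pd2_pdn a b u : smooth2 u -> pd2 (pdn a b u) = pdn a (S b) u.
Proof. intros Hu. change (pd2 (pdn a b u)) with (pdn 0 1 (pdn a b u)).
  rewrite pdn_comp by auto. reflexivity. Qed.

Lemma pd2_SumT u v l : smooth2 u -> smooth2 v -> pd2 (SumT u v l) = SumT u v (step2 l).
Proof.
  intros Hu Hv. induction l as [|t l IH].
  - apply fn2_ext; intros x y. unfold pd2. change (Derive (fun _ => 0) y = 0). apply Derive_const.
  - change (SumT u v (t :: l)) with (plus2 (term u v t) (SumT u v l)).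
    rewrite (pd2_plus (term u v t) (SumT u v l) (reg_term u v t Hu Hv) (reg_SumT u v l Hu Hv)).
    rewrite IH. destruct t as [[p q] [r s]].
    change (step2 (((p,q),(r,s)) :: l)) with ([((p, q), (r, S s)); ((p, S q), (r, s))] ++ step2 l).
    rewrite SumT_app.
    change (term u v ((p,q),(r,s))) with (mul2 (pdn p q u) (pdn r s v)).
    rewrite pd2_mul by (apply smooth_reg; auto).
    rewrite !pd2_pdn by auto.
    apply fn2_ext; intros x y. cbv [plus2 mul2 SumT term fst snd]. ring.
Qed.

Definition lstg (a b : nat) (l : list tm) := Nat.iter a step1 (Nat.iter b step2 l).

Lemma pdn_SumT a b u v l : smooth2 u -> smooth2 v ->
  pdn a b (SumT u v l) = SumT u v (lstg a b l).
Proof.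
  intros Hu Hv. unfold pdn, lstg. induction a as [|a IH]; simpl.
  - induction b as [|b IHb]; simpl; auto. rewrite IHb. apply pd2_SumT; auto.
  - rewrite IH. apply pd1_SumT; auto.
Qed.

Lemma smooth_SumT u v l : smooth2 u -> smooth2 v -> smooth2 (SumT u v l).
Proof.
  intros Hu Hv a b x y. rewrite pdn_SumT by auto. apply reg_SumT; auto.
Qed.

Definition l0 : list tm := [((0,0),(0,0))%nat].

Lemma mul_SumT u v : mul2 u v = SumT u v l0.
Proof. apply fn2_ext; intros x y. change (u x y * v x y = u x y * v x y + 0). ring. Qed.

Lemma smooth_mul u v : smooth2 u -> smooth2 v -> smooth2 (mul2 u v).
Proof. intros. rewrite mul_SumT. apply smooth_SumT; auto. Qed.

Lemma pdn_mul a b u v : smooth2 u -> smooth2 v -> pdn a b (mul2 u v) = SumT u v (lstg a b l0).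
Proof. intros. rewrite mul_SumT. apply pdn_SumT; auto. Qed.

Lemma PIpos : 0 < PI. Proof. apply PI_RGT_0. Qed.

Lemma sm_cont u : smooth2 u -> forall x y, continuous (fun p : R * R => u (fst p) (snd p)) (x, y).
Proof. intros H x y. exact (sm_c u 0 0 x y H). Qed.

Lemma exy u x a b : smooth2 u -> ex_RInt (fun y => u x y) a b.
Proof. intros H. apply ex_RInt_y. apply sm_cont; auto. Qed.

Lemma exx1 u y a b : smooth2 u -> ex_RInt (fun x => u x y) a b.
Proof. intros H. apply ex_RInt_x. apply sm_cont; auto. Qed.

Lemma Phi_deriv u a b x : smooth2 u ->
  is_derive (fun x => RInt (fun y => u x y) a b) x (RInt (fun y => pd1 u x y) a b).
Proof.
  intros H. apply derive_param.
  - intros x0 y0; exact (sm_dx u 0 0 x0 y0 H).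
  - apply sm_cont; auto.
  - apply sm_cont. apply smooth_pd1; auto.
Qed.

Lemma Phi_cont u a b x : smooth2 u -> continuous (fun x => RInt (fun y => u x y) a b) x.
Proof.
  intros H. apply (@ex_derive_continuous R_AbsRing R_NormedModule). eexists. apply Phi_deriv; auto.
Qed.

Lemma exx u a b c d : smooth2 u -> ex_RInt (fun x => RInt (fun y => u x y) a b) c d.
Proof.
  intros H. apply (@ex_RInt_continuous R_CompleteNormedModule). intros z _. apply Phi_cont; auto.
Qed.

Lemma intT2_plus u v : smooth2 u -> smooth2 v -> intT2 (plus2 u v) = intT2 u + intT2 v.
Proof.
  intros Hu Hv. unfold intT2, plus2.
  rewrite (RInt_ext _ (fun x => RInt (fun y => u x y) (-PI) PI + RInt (fun y => v x y) (-PI) PI)).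
  - apply (RInt_plus (V:=R_CompleteNormedModule)); apply exx; auto.
  - intros x _. apply (RInt_plus (V:=R_CompleteNormedModule)); apply exy; auto.
Qed.

Lemma intT2_scal c u : smooth2 u -> intT2 (scal2 c u) = c * intT2 u.
Proof.
  intros Hu. unfold intT2, scal2.
  rewrite (RInt_ext _ (fun x => c * RInt (fun y => u x y) (-PI) PI)).
  - apply (RInt_scal (V:=R_CompleteNormedModule)); apply exx; auto.
  - intros x _. apply (RInt_scal (V:=R_CompleteNormedModule)); apply exy; auto.
Qed.

Lemma intT2_le u v : smooth2 u -> smooth2 v ->
  (forall x y, -PI <= x <= PI -> -PI <= y <= PI -> u x y <= v x y) -> intT2 u <= intT2 v.
Proof.
  intros Hu Hv H. pose proof PIpos. unfold intT2. apply RInt_le.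
  - lra.
  - apply exx; auto.
  - apply exx; auto.
  - intros x Hx. apply RInt_le. lra. apply exy; auto. apply exy; auto.
    intros y Hy. apply H; lra.
Qed.

Lemma intT2_ext u v : (forall x y, u x y = v x y) -> intT2 u = intT2 v.
Proof. intros H. rewrite (fn2_ext u v H). reflexivity. Qed.

Lemma intT2_pd2_0 F : smooth2 F -> periodic2 F -> intT2 (pd2 F) = 0.
Proof.
  intros Hs Hp. unfold intT2.
  rewrite (RInt_ext _ (fun _ => 0)).
  - rewrite RInt_const. apply (@scal_zero_r R_AbsRing R_NormedModule).
  - intros x _. unfold pd2.
    rewrite (RInt_Derive (fun t => F x t)).
    + pose proof (proj2 (Hp x (-PI))) as H2. replace (-PI + 2*PI) with PI in H2 by ring. rewrite H2. apply Rminus_diag_eq; reflexivity.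
    + intros t _. exact (sm_dy F 0 0 x t Hs).
    + intros t _. apply (cont2_y (pd2 F) x t). apply sm_cont. apply smooth_pd2; auto.
Qed.

Lemma intT2_pd1_0 F : smooth2 F -> periodic2 F -> intT2 (pd1 F) = 0.
Proof.
  intros Hs Hp. unfold intT2.
  set (Phi := fun x => RInt (fun y => F x y) (-PI) PI).
  rewrite (RInt_ext _ (Derive Phi)).
  - rewrite RInt_Derive.
    + unfold Phi.
      rewrite (RInt_ext (fun y => F PI y) (fun y => F (-PI) y)).
      * ring.
      * intros y _. pose proof (proj1 (Hp (-PI) y)) as H2. replace (-PI + 2*PI) with PI in H2 by ring. exact H2.
    + intros x _. eexists. apply Phi_deriv; auto.
    + intros x _. apply (continuous_ext (fun x => RInt (fun y => pd1 F x y) (-PI) PI)).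
      * intros z. symmetry. apply is_derive_unique. apply Phi_deriv; auto.
      * apply Phi_cont. apply smooth_pd1; auto.
  - intros x _. symmetry. apply is_derive_unique. apply Phi_deriv; auto.
Qed.

Lemma PIge3 : 3 <= PI. Proof. pose proof PI2_3_2. lra. Qed.

Definition sq (u : fn2) : fn2 := fun x y => u x y ^ 2.

Lemma sq_mul u : sq u = mul2 u u.
Proof. apply fn2_ext; intros; unfold sq, mul2; ring. Qed.

Lemma smooth_sq u : smooth2 u -> smooth2 (sq u).
Proof. intros; rewrite sq_mul; apply smooth_mul; auto. Qed.

Lemma smooth_zero : smooth2 (fun _ _ => 0).
Proof.
  assert (E : forall a b, pdn a b (fun _ _ => 0) = (fun _ _ => 0)).
  { intros a b. unfold pdn. induction a as [|a IH]; simpl.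
    - induction b as [|b IHb]; simpl; auto. rewrite IHb. apply fn2_ext; intros.
      unfold pd2. apply Derive_const.
    - rewrite IH. apply fn2_ext; intros. unfold pd1. apply Derive_const. }
  intros a b x y. rewrite E. apply reg_zero.
Qed.

Lemma intT2_zero : intT2 (fun _ _ => 0) = 0.
Proof.
  rewrite (intT2_ext _ (scal2 0 (fun _ _ => 0))) by (intros; unfold scal2; ring).
  rewrite intT2_scal by apply smooth_zero. ring.
Qed.

Lemma intT2_ge0 u : smooth2 u -> (forall x y, -PI <= x <= PI -> -PI <= y <= PI -> 0 <= u x y) -> 0 <= intT2 u.
Proof.
  intros Hu H. rewrite <- intT2_zero. apply intT2_le; auto. apply smooth_zero.
Qed.

Lemma L2sq_nonneg u : smooth2 u -> 0 <= L2sq u.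
Proof.
  intros Hu. unfold L2sq. apply (intT2_ge0 (sq u)). apply smooth_sq; auto.
  intros; unfold sq; nra.
Qed.

Lemma lam_lemma X A B M : 0 <= A -> 0 <= B -> 0 <= M ->
  (forall l, 0 < l -> X <= M / 2 * (l * A + B / l)) -> X <= M * sqrt A * sqrt B.
Proof.
  intros HA HB HM H.
  destruct (Req_dec A 0) as [EA|NA].
  - subst A. rewrite sqrt_0. replace (M * 0 * sqrt B) with 0 by ring.
    destruct (Rle_dec X 0) as [|NX]; auto. exfalso.
    assert (HX : 0 < X) by lra.
    specialize (H ((M * B + 1) / X)). 
    assert (Hl : 0 < (M * B + 1) / X) by (apply Rdiv_lt_0_compat; nra).
    specialize (H Hl).
    replace (M / 2 * ((M * B + 1) / X * 0 + B / ((M * B + 1) / X))) with (M * B * X / (2 * (M * B + 1))) in H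
      by (assert (X <> 0) by lra; assert (M * B + 1 <> 0) by nra; field; repeat split; assumption).
    assert (M * B * X / (2 * (M * B + 1)) < X).
    { assert (HMB : M * B + 1 <> 0) by nra. apply (Rmult_lt_reg_r (2 * (M * B + 1))). nra.
      replace (M * B * X / (2 * (M * B + 1)) * (2 * (M * B + 1))) with (M * B * X) by (field; exact HMB). nra. }
    lra.
  - destruct (Req_dec B 0) as [EB|NB].
    + subst B. rewrite sqrt_0. replace (M * sqrt A * 0) with 0 by ring.
      destruct (Rle_dec X 0) as [|NX]; auto. exfalso.
      assert (HX : 0 < X) by lra.
      specialize (H (X / (M * A + 1))).
      assert (Hl : 0 < X / (M * A + 1)) by (apply Rdiv_lt_0_compat; nra).
      specialize (H Hl).
      replace (M / 2 * (X / (M * A + 1) * A + 0 / (X / (M * A + 1)))) with (M * A * X / (2 * (M * A + 1))) in H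
        by (assert (X <> 0) by lra; assert (M * A + 1 <> 0) by nra; field; repeat split; assumption).
      assert (M * A * X / (2 * (M * A + 1)) < X).
      { assert (HMB : M * A + 1 <> 0) by nra. apply (Rmult_lt_reg_r (2 * (M * A + 1))). nra.
        replace (M * A * X / (2 * (M * A + 1)) * (2 * (M * A + 1))) with (M * A * X) by (field; exact HMB). nra. }
      lra.
    + assert (sA : 0 < sqrt A) by (apply sqrt_lt_R0; lra).
      assert (sB : 0 < sqrt B) by (apply sqrt_lt_R0; lra).
      specialize (H (sqrt B / sqrt A)). 
      assert (Hl : 0 < sqrt B / sqrt A) by (apply Rdiv_lt_0_compat; auto).
      specialize (H Hl).
      pose proof (pow2_sqrt A HA) as EA. pose proof (pow2_sqrt B HB) as EB.
      set (sa := sqrt A) in *. set (sb := sqrt B) in *.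
      rewrite <- EA, <- EB in H.
      replace (M / 2 * (sb / sa * sa ^ 2 + sb ^ 2 / (sb / sa))) with (M * sa * sb) in H
        by (field; split; lra).
      exact H.
Qed.

Lemma amgm v w l : 0 < l -> Rabs v * Rabs w <= / 2 * (l * v ^ 2 + w ^ 2 / l).
Proof.
  intros Hl.
  assert (E : l * (/ 2 * (l * v ^ 2 + w ^ 2 / l) - Rabs v * Rabs w) = / 2 * (l * Rabs v - Rabs w) ^ 2).
  { replace (v ^ 2) with (Rabs v ^ 2) by (rewrite <- Rabs_pow_abs2 || (rewrite pow2_abs; reflexivity)).
    replace (w ^ 2) with (Rabs w ^ 2) by (rewrite pow2_abs; reflexivity).
    field. lra. }
  assert (0 <= / 2 * (l * Rabs v - Rabs w) ^ 2) by (apply Rmult_le_pos; [lra | apply pow2_ge_0]).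
  assert (0 <= / 2 * (l * v ^ 2 + w ^ 2 / l) - Rabs v * Rabs w).
  { destruct (Rle_dec 0 (/ 2 * (l * v ^ 2 + w ^ 2 / l) - Rabs v * Rabs w)); auto. nra. }
  lra.
Qed.

Lemma holder u v w M : smooth2 u -> smooth2 v -> smooth2 w -> 0 <= M ->
  (forall x y, -PI <= x <= PI -> -PI <= y <= PI -> Rabs (u x y) <= M) ->
  Rabs (intT2 (fun x y => u x y * v x y * w x y)) <= M * sqrt (L2sq v) * sqrt (L2sq w).
Proof.
  intros Hu Hv Hw HM HB.
  apply lam_lemma; try apply L2sq_nonneg; auto.
  intros l Hl.
  set (Q := plus2 (scal2 (M / 2 * l) (sq v)) (scal2 (M / 2 / l) (sq w))).
  assert (SQ : smooth2 Q) by (apply smooth_plus; apply smooth_scal; apply smooth_sq; auto).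
  assert (IQ : intT2 Q = M / 2 * (l * L2sq v + L2sq w / l)).
  { assert (S1 : smooth2 (sq v)) by (apply smooth_sq; auto).
    assert (S2 : smooth2 (sq w)) by (apply smooth_sq; auto).
    unfold Q. rewrite (intT2_plus _ _ (smooth_scal _ _ S1) (smooth_scal _ _ S2)).
    rewrite (intT2_scal _ _ S1), (intT2_scal _ _ S2).
    unfold L2sq. fold (sq v). fold (sq w). field. lra. }
  rewrite <- IQ.
  assert (Sp : smooth2 (fun x y => u x y * v x y * w x y)).
  { change (fun x y => u x y * v x y * w x y) with (mul2 (mul2 u v) w). exact (smooth_mul _ _ (smooth_mul _ _ Hu Hv) Hw). }
  assert (Pt : forall x y, -PI <= x <= PI -> -PI <= y <= PI -> Rabs (u x y * v x y * w x y) <= Q x y).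
  { intros x y Hx Hy. unfold Q, plus2, scal2, sq.
    rewrite !Rabs_mult. specialize (HB x y Hx Hy). pose proof (amgm (v x y) (w x y) l Hl).
    assert (Rabs (u x y) * Rabs (v x y) * Rabs (w x y) <= M * (Rabs (v x y) * Rabs (w x y))).
    { rewrite Rmult_assoc. apply Rmult_le_compat_r; auto. apply Rmult_le_pos; apply Rabs_pos. }
    assert (M * (Rabs (v x y) * Rabs (w x y)) <= M * (/ 2 * (l * v x y ^ 2 + w x y ^ 2 / l))).
    { apply Rmult_le_compat_l; auto. }
    replace (M / 2 * l * v x y ^ 2 + M / 2 / l * w x y ^ 2) with (M * (/ 2 * (l * v x y ^ 2 + w x y ^ 2 / l))) by (field; lra).
    lra. }
  apply Rabs_le. split.
  - assert (HL : intT2 (scal2 (-1) Q) <= intT2 (fun x y => u x y * v x y * w x y)).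
    { apply intT2_le; auto. apply smooth_scal; auto.
      intros x y Hx Hy. specialize (Pt x y Hx Hy). unfold scal2.
      pose proof (Rle_abs (- (u x y * v x y * w x y))) as H. rewrite Rabs_Ropp in H. lra. }
    rewrite (intT2_scal _ _ SQ) in HL. lra.
  - apply intT2_le; auto. intros x y Hx Hy. specialize (Pt x y Hx Hy).
    pose proof (Rle_abs (u x y * v x y * w x y)). lra.
Qed.

Lemma RIplus (f g : R -> R) a b : ex_RInt f a b -> ex_RInt g a b ->
  RInt (fun x => f x + g x) a b = RInt f a b + RInt g a b.
Proof. intros; apply (RInt_plus (V:=R_CompleteNormedModule)); auto. Qed.

Lemma RIscal (f : R -> R) c a b : ex_RInt f a b -> RInt (fun x => c * f x) a b = c * RInt f a b.
Proof. intros; apply (RInt_scal (V:=R_CompleteNormedModule)); auto. Qed.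

Lemma RIconst c a b : RInt (fun _ => c) a b = (b - a) * c.
Proof. apply (RInt_const (V:=R_CompleteNormedModule)). Qed.

Lemma exRc (f : R -> R) a b : (forall t, continuous f t) -> ex_RInt f a b.
Proof. intros H. apply (@ex_RInt_continuous R_CompleteNormedModule). intros; apply H. Qed.

Lemma RIchasles (f : R -> R) a b c : ex_RInt f a b -> ex_RInt f b c ->
  RInt f a b + RInt f b c = RInt f a c.
Proof. intros; apply (RInt_Chasles (V:=R_CompleteNormedModule)); auto. Qed.

Lemma sob1 (k k' B : R -> R) x0 : -PI <= x0 <= PI ->
  (forall t, is_derive k t (k' t)) -> (forall t, continuous k' t) -> (forall t, continuous B t) ->
  (forall t, Rabs (k' t) <= B t) -> (forall t, 0 <= k t) ->
  k x0 <= RInt (fun t => k t + B t) (-PI) PI.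
Proof.
  intros Hx0 Hd Hc' HcB HkB Hk0.
  pose proof PIge3 as P3.
  assert (ck : forall t, continuous k t).
  { intro t. apply (@ex_derive_continuous R_AbsRing R_NormedModule). eexists; apply Hd. }
  assert (FTC : forall a b, k b - k a = RInt k' a b).
  { intros a b. symmetry. rewrite (RInt_ext k' (Derive k)).
    - apply RInt_Derive. intros; eexists; apply Hd.
      intros x _. apply (continuous_ext k'). intro; symmetry; apply is_derive_unique; apply Hd. apply Hc'.
    - intros x _. symmetry; apply is_derive_unique; apply Hd. }
  assert (B0 : forall t, 0 <= B t) by (intro t; pose proof (HkB t); pose proof (Rabs_pos (k' t)); lra).
  assert (IB0 : forall a b, a <= b -> 0 <= RInt B a b).
  { intros a b Hab. apply RInt_ge_0; auto. apply exRc; auto. }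
  assert (C1 : forall x, -PI <= x <= PI -> k x0 - k x <= RInt B (-PI) PI).
  { intros x Hx. destruct (Rle_dec x x0) as [Hle|Hlt].
    - rewrite <- (RIchasles B (-PI) x PI) by (apply exRc; auto).
      rewrite <- (RIchasles B x x0 PI) by (apply exRc; auto).
      assert (0 <= RInt B (-PI) x) by (apply IB0; lra).
      assert (0 <= RInt B x0 PI) by (apply IB0; lra).
      assert (k x0 - k x <= RInt B x x0).
      { rewrite FTC. apply RInt_le; auto; try (apply exRc; auto).
        intros t _. pose proof (HkB t). pose proof (Rle_abs (k' t)). lra. }
      lra.
    - rewrite <- (RIchasles B (-PI) x0 PI) by (apply exRc; auto).
      rewrite <- (RIchasles B x0 x PI) by (apply exRc; auto).
      assert (0 <= RInt B (-PI) x0) by (apply IB0; lra).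
      assert (0 <= RInt B x PI) by (apply IB0; lra).
      assert (k x0 - k x <= RInt B x0 x).
      { assert (E : k x0 - k x = -1 * RInt k' x0 x) by (rewrite <- FTC; ring).
        rewrite E, <- RIscal by (apply exRc; auto).
        apply RInt_le; try lra; try (apply exRc; auto).
        + intro t. apply (continuous_mult (fun _ => -1) k'). apply continuous_const. apply Hc'.
        + intros t _. pose proof (HkB t). pose proof (Rle_abs (- k' t)). rewrite Rabs_Ropp in *. lra. }
      lra. }
  assert (C2 : RInt (fun x => k x0 + -1 * k x) (-PI) PI <= RInt (fun _ => RInt B (-PI) PI) (-PI) PI).
  { apply RInt_le; try lra.
    - apply exRc. intro t. apply (continuous_plus (fun _ => k x0) (fun x => -1 * k x)).
      apply continuous_const. apply (continuous_mult (fun _ => -1) k). apply continuous_const. apply ck.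
    - apply exRc. intro; apply continuous_const.
    - intros x Hx. pose proof (C1 x ltac:(lra)). lra. }
  assert (cmk : forall t, continuous (fun x => -1 * k x) t).
  { intro t. apply (continuous_mult (fun _ => -1) k). apply continuous_const. apply ck. }
  rewrite RIplus in C2 by (apply exRc; intro; first [apply continuous_const | apply cmk]).
  rewrite RIscal in C2 by (apply exRc; auto).
  rewrite !RIconst in C2.
  rewrite RIplus by (apply exRc; auto).
  assert (0 <= RInt k (-PI) PI) by (apply RInt_ge_0; try lra; try (apply exRc; auto); intros; apply Hk0).
  assert (0 <= RInt B (-PI) PI) by (apply IB0; lra).
  nra.
Qed.

Lemma RIext (f g : R -> R) a b : (forall x, f x = g x) -> RInt f a b = RInt g a b.
Proof. intros H. apply RInt_ext. intros; apply H. Qed.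

Lemma isd_sq (f : R -> R) x l : is_derive f x l -> is_derive (fun t => f t ^ 2) x (2 * f x * l).
Proof.
  intros H. pose proof (is_derive_pow f 2 x l H) as H2.
  replace (2 * f x * l) with (INR 2 * l * f x ^ Init.Nat.pred 2) by (simpl; ring). exact H2.
Qed.

Lemma abs2 a b : Rabs (2 * a * b) <= a ^ 2 + b ^ 2.
Proof. apply Rabs_le. assert (0 <= (a+b)*(a+b)) by apply Rle_0_sqr. assert (0 <= (a-b)*(a-b)) by apply Rle_0_sqr. simpl. split; nra. Qed.

Lemma sobA w x y0 : smooth2 w -> -PI <= y0 <= PI ->
  w x y0 ^ 2 <= RInt (fun y => 2 * w x y ^ 2 + pd2 w x y ^ 2) (-PI) PI.
Proof.
  intros Hw Hy.
  assert (cw : forall t, continuous (fun t => w x t) t) by (intro; apply cont2_y; apply sm_cont; auto).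
  assert (cw2 : forall t, continuous (fun t => pd2 w x t) t)
    by (intro; apply (cont2_y (pd2 w)); apply sm_cont; apply smooth_pd2; auto).
  eapply Rle_trans.
  - apply (sob1 (fun t => w x t ^ 2) (fun t => 2 * w x t * pd2 w x t) (fun t => w x t ^ 2 + pd2 w x t ^ 2)); auto.
    + intro t. apply (isd_sq (fun t => w x t)). apply (Derive_correct (fun t => w x t)). apply (sm_dy w 0 0 x t Hw).
    + intro t. apply (continuous_mult (fun t => 2 * w x t) (fun t => pd2 w x t)); auto.
      apply (continuous_mult (fun _ => 2) (fun t => w x t)); auto. apply continuous_const.
    + intro t. apply (continuous_plus (fun t => w x t ^ 2) (fun t => pd2 w x t ^ 2)).
      * apply (continuous_ext (fun t => w x t * (w x t * 1))). intro; simpl; ring.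
        apply (continuous_mult (fun t => w x t)); auto. apply (continuous_mult (fun t => w x t) (fun _ => 1)); auto. apply continuous_const.
      * apply (continuous_ext (fun t => pd2 w x t * (pd2 w x t * 1))). intro; simpl; ring.
        apply (continuous_mult (fun t => pd2 w x t)); auto. apply (continuous_mult (fun t => pd2 w x t) (fun _ => 1)); auto. apply continuous_const.
    + intro t. apply abs2.
    + intro t. apply pow2_ge_0.
  - right. apply RIext. intros; ring.
Qed.

Lemma sobB w x0 y : smooth2 w -> -PI <= x0 <= PI ->
  w x0 y ^ 2 <= RInt (fun x => 2 * w x y ^ 2 + pd1 w x y ^ 2) (-PI) PI.
Proof.
  intros Hw Hx.
  assert (cw : forall t, continuous (fun t => w t y) t) by (intro; apply cont2_x; apply sm_cont; auto).
  assert (cw2 : forall t, continuous (fun t => pd1 w t y) t)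
    by (intro; apply (cont2_x (pd1 w)); apply sm_cont; apply smooth_pd1; auto).
  eapply Rle_trans.
  - apply (sob1 (fun t => w t y ^ 2) (fun t => 2 * w t y * pd1 w t y) (fun t => w t y ^ 2 + pd1 w t y ^ 2)); auto.
    + intro t. apply (isd_sq (fun t => w t y)). apply (Derive_correct (fun t => w t y)). apply (sm_dx w 0 0 t y Hw).
    + intro t. apply (continuous_mult (fun t => 2 * w t y) (fun t => pd1 w t y)); auto.
      apply (continuous_mult (fun _ => 2) (fun t => w t y)); auto. apply continuous_const.
    + intro t. apply (continuous_plus (fun t => w t y ^ 2) (fun t => pd1 w t y ^ 2)).
      * apply (continuous_ext (fun t => w t y * (w t y * 1))). intro; simpl; ring.
        apply (continuous_mult (fun t => w t y)); auto. apply (continuous_mult (fun t => w t y) (fun _ => 1)); auto. apply continuous_const.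
      * apply (continuous_ext (fun t => pd1 w t y * (pd1 w t y * 1))). intro; simpl; ring.
        apply (continuous_mult (fun t => pd1 w t y)); auto. apply (continuous_mult (fun t => pd1 w t y) (fun _ => 1)); auto. apply continuous_const.
    + intro t. apply abs2.
    + intro t. apply pow2_ge_0.
  - right. apply RIext. intros; ring.
Qed.

Lemma Hsq2_expand h : Hsq 2 h =
  L2sq (pdn 0 0 h) + L2sq (pdn 0 1 h) + L2sq (pdn 0 2 h) +
  (L2sq (pdn 1 0 h) + L2sq (pdn 1 1 h)) + L2sq (pdn 2 0 h).
Proof. reflexivity. Qed.

Lemma sob2 h x0 y0 : smooth2 h -> -PI <= x0 <= PI -> -PI <= y0 <= PI ->
  h x0 y0 ^ 2 <= 4 * Hsq 2 h.
Proof.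
  intros Hh Hx Hy.
  set (G1 := (fun x y => 2 * h x y ^ 2 + pd2 h x y ^ 2) : fn2).
  set (G2 := (fun x y => 2 * pd1 h x y ^ 2 + pd2 (pd1 h) x y ^ 2) : fn2).
  assert (Sh1 : smooth2 (pd1 h)) by (apply smooth_pd1; auto).
  assert (SG1 : smooth2 G1) by exact (smooth_plus _ _ (smooth_scal 2 _ (smooth_sq _ Hh)) (smooth_sq _ (smooth_pd2 _ Hh))).
  assert (SG2 : smooth2 G2) by exact (smooth_plus _ _ (smooth_scal 2 _ (smooth_sq _ Sh1)) (smooth_sq _ (smooth_pd2 _ Sh1))).
  assert (I1 : intT2 G1 = 2 * L2sq h + L2sq (pd2 h)).
  { change G1 with (plus2 (scal2 2 (sq h)) (sq (pd2 h))).
    rewrite (intT2_plus _ _ (smooth_scal 2 _ (smooth_sq _ Hh)) (smooth_sq _ (smooth_pd2 _ Hh))).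
    rewrite (intT2_scal _ _ (smooth_sq _ Hh)). reflexivity. }
  assert (I2 : intT2 G2 = 2 * L2sq (pd1 h) + L2sq (pd2 (pd1 h))).
  { change G2 with (plus2 (scal2 2 (sq (pd1 h))) (sq (pd2 (pd1 h)))).
    rewrite (intT2_plus _ _ (smooth_scal 2 _ (smooth_sq _ Sh1)) (smooth_sq _ (smooth_pd2 _ Sh1))).
    rewrite (intT2_scal _ _ (smooth_sq _ Sh1)). reflexivity. }
  assert (I3 : intT2 (plus2 (scal2 2 G1) G2) = 2 * intT2 G1 + intT2 G2).
  { rewrite (intT2_plus _ _ (smooth_scal 2 _ SG1) SG2). rewrite (intT2_scal _ _ SG1). reflexivity. }
  assert (E11 : pd2 (pd1 h) = pdn 1 1 h).
  { apply fn2_ext; intros. apply commute; auto. }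
  assert (Step : RInt (fun x => 2 * h x y0 ^ 2 + pd1 h x y0 ^ 2) (-PI) PI <= intT2 (plus2 (scal2 2 G1) G2)).
  { unfold intT2. apply RInt_le.
    - pose proof PIpos; lra.
    - apply (exx1 (plus2 (scal2 2 (sq h)) (sq (pd1 h)))).
      exact (smooth_plus _ _ (smooth_scal 2 _ (smooth_sq _ Hh)) (smooth_sq _ Sh1)).
    - apply exx. apply (smooth_plus _ _ (smooth_scal 2 _ SG1) SG2).
    - intros x Hx'.
      rewrite (RIext _ (fun y => 2 * G1 x y + G2 x y)) by (intros; reflexivity).
      rewrite (RIplus (fun y => 2 * G1 x y) (fun y => G2 x y) (-PI) PI (exy (scal2 2 G1) x _ _ (smooth_scal 2 G1 SG1)) (exy G2 x _ _ SG2)).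
      rewrite (RIscal (fun y => G1 x y) 2 (-PI) PI (exy G1 x _ _ SG1)).
      pose proof (sobA h x y0 Hh Hy) as A1. pose proof (sobA (pd1 h) x y0 Sh1 Hy) as A2.
      change (RInt (fun y => 2 * h x y ^ 2 + pd2 h x y ^ 2) (-PI) PI) with (RInt (fun y => G1 x y) (-PI) PI) in A1.
      change (RInt (fun y => 2 * pd1 h x y ^ 2 + pd2 (pd1 h) x y ^ 2) (-PI) PI) with (RInt (fun y => G2 x y) (-PI) PI) in A2.
      lra. }
  pose proof (sobB h x0 y0 Hh Hx) as B1.
  rewrite I3, I1, I2, E11 in Step.
  rewrite Hsq2_expand.
  assert (0 <= L2sq (pdn 0 2 h)) by (apply L2sq_nonneg; apply smooth_pdn; auto).
  assert (0 <= L2sq (pdn 2 0 h)) by (apply L2sq_nonneg; apply smooth_pdn; auto).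
  assert (0 <= L2sq (pdn 1 1 h)) by (apply L2sq_nonneg; apply smooth_pdn; auto).
  assert (0 <= L2sq h) by (apply L2sq_nonneg; auto).
  assert (0 <= L2sq (pd1 h)) by (apply L2sq_nonneg; auto).
  assert (0 <= L2sq (pd2 h)) by (apply L2sq_nonneg; apply smooth_pd2; auto).
  change (pdn 0 0 h) with h. change (pdn 0 1 h) with (pd2 h). change (pdn 1 0 h) with (pd1 h).
  lra.
Qed.

Lemma sob_abs h x0 y0 : smooth2 h -> -PI <= x0 <= PI -> -PI <= y0 <= PI ->
  Rabs (h x0 y0) <= 2 * sqrt (Hsq 2 h).
Proof.
  intros Hh Hx Hy. pose proof (sob2 h x0 y0 Hh Hx Hy) as H.
  rewrite <- sqrt_pow2 with (x := Rabs (h x0 y0)) by apply Rabs_pos.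
  rewrite <- (sqrt_pow2 2) by lra. rewrite <- sqrt_mult_alt by lra.
  apply sqrt_le_1_alt. rewrite <- Rabs_pow_abs2 || (rewrite pow2_abs). lra.
Qed.

Lemma m_bound s0 : (s0 <= 2*(s0/2)+1)%nat /\ (2*(s0/2) <= s0)%nat.
Proof. pose proof (Nat.div_mod s0 2 ltac:(lia)). pose proof (Nat.mod_upper_bound s0 2 ltac:(lia)). lia. Qed.

Lemma sum_ge_term (f : nat -> R) n i : (forall j, 0 <= f j) -> (i <= n)%nat -> f i <= sum_f_R0 f n.
Proof.
  intros Hf Hi. induction n as [|n IH].
  - assert (i = 0%nat) by lia. subst. simpl. lra.
  - simpl. destruct (Nat.eq_dec i (S n)) as [E|NE].
    + subst. pose proof (cond_pos_sum f n Hf). lra.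
    + assert (i <= n)%nat by lia. pose proof (IH H). pose proof (Hf (S n)). lra.
Qed.

Lemma L2pdn_nonneg u a b : smooth2 u -> 0 <= L2sq (pdn a b u).
Proof. intros; apply L2sq_nonneg; apply smooth_pdn; auto. Qed.

Lemma Hsq_nonneg k u : smooth2 u -> 0 <= Hsq k u.
Proof.
  intros Hu. unfold Hsq. apply cond_pos_sum. intro a. apply cond_pos_sum. intro b. apply L2pdn_nonneg; auto.
Qed.

Lemma L2_le_Hsq u p q k : smooth2 u -> (p + q <= k)%nat -> L2sq (pdn p q u) <= Hsq k u.
Proof.
  intros Hu Hk. unfold Hsq.
  eapply Rle_trans; [| apply (sum_ge_term _ k p)].
  - apply (sum_ge_term (fun b => L2sq (pdn p b u)) (k - p) q).
    + intro; apply L2pdn_nonneg; auto.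
    + lia.
  - intro a. apply cond_pos_sum. intro b. apply L2pdn_nonneg; auto.
  - lia.
Qed.

Lemma Hdotsq_nonneg k u : smooth2 u -> 0 <= Hdotsq k u.
Proof. intros Hu. unfold Hdotsq. apply cond_pos_sum. intro a. apply L2pdn_nonneg; auto. Qed.

Lemma L2_le_Hdot u a s0 : smooth2 u -> (a <= s0)%nat -> L2sq (pdn a (s0 - a) u) <= Hdotsq s0 u.
Proof.
  intros Hu Ha. unfold Hdotsq. apply (sum_ge_term (fun a => L2sq (pdn a (s0 - a) u))); auto.
  intro; apply L2pdn_nonneg; auto.
Qed.

Lemma sqrt_L2_le u p q k : smooth2 u -> (p + q <= k)%nat -> sqrt (L2sq (pdn p q u)) <= sqrt (Hsq k u).
Proof. intros; apply sqrt_le_1_alt; apply L2_le_Hsq; auto. Qed.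

Lemma SobK w p q k x y : smooth2 w -> (p + q + 2 <= k)%nat -> -PI <= x <= PI -> -PI <= y <= PI ->
  Rabs (pdn p q w x y) <= 6 * sqrt (Hsq k w).
Proof.
  intros Hw Hk Hx Hy.
  pose proof (sob_abs (pdn p q w) x y (smooth_pdn p q w Hw) Hx Hy) as H.
  assert (Hs : Hsq 2 (pdn p q w) <= 6 * Hsq k w).
  { rewrite Hsq2_expand. rewrite !pdn_comp by auto.
    assert (forall c d, (c + d <= 2)%nat -> L2sq (pdn (c + p) (d + q) w) <= Hsq k w).
    { intros c d Hcd. apply L2_le_Hsq; auto. lia. }
    pose proof (H0 0 0 ltac:(lia))%nat. pose proof (H0 0 1 ltac:(lia))%nat. pose proof (H0 0 2 ltac:(lia))%nat.
    pose proof (H0 1 0 ltac:(lia))%nat. pose proof (H0 1 1 ltac:(lia))%nat. pose proof (H0 2 0 ltac:(lia))%nat.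
    lra. }
  assert (sqrt (Hsq 2 (pdn p q w)) <= 3 * sqrt (Hsq k w)).
  { pose proof (Hsq_nonneg k w Hw).
    rewrite <- (sqrt_pow2 3) by lra. rewrite <- sqrt_mult_alt by lra.
    apply sqrt_le_1_alt. lra. }
  lra.
Qed.

Lemma Hnorm2_ge1 k u v : smooth2 u -> smooth2 v -> sqrt (Hsq k u) <= Hnorm2 k u v.
Proof. intros Hu Hv. unfold Hnorm2. apply sqrt_le_1_alt. pose proof (Hsq_nonneg k v Hv). lra. Qed.
Lemma Hnorm2_ge2 k u v : smooth2 u -> smooth2 v -> sqrt (Hsq k v) <= Hnorm2 k u v.
Proof. intros Hu Hv. unfold Hnorm2. apply sqrt_le_1_alt. pose proof (Hsq_nonneg k u Hu). lra. Qed.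

Definition good (a b : nat) (t : tm) : Prop :=
  match t with ((p, q), (r, s)) => (p + r = a)%nat /\ (q + s = b)%nat /\ (1 <= p + q)%nat end.

Definition Inv a b (l : list tm) : Prop :=
  exists l', l = ((0,0),(a,b))%nat :: l' /\ List.Forall (good a b) l' /\ (length l' + 1 = 2 ^ (a + b))%nat.

Lemma Forall_flat_map (P Q : tm -> Prop) (st : tm -> list tm) l :
  (forall t, P t -> List.Forall Q (st t)) -> List.Forall P l -> List.Forall Q (flat_map st l).
Proof.
  intros H HP. induction HP; simpl. constructor. apply Forall_app. split; auto.
Qed.

Lemma len_fm (st : tm -> list tm) l : (forall t, length (st t) = 2%nat) ->
  length (flat_map st l) = (2 * length l)%nat.
Proof. intros H. induction l as [|t l IH]; simpl; auto. rewrite length_app, IH, H. lia. Qed.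

Lemma len_st1 l : length (step1 l) = (2 * length l)%nat.
Proof. apply len_fm. intros [[p q] [r s]]; reflexivity. Qed.
Lemma len_st2 l : length (step2 l) = (2 * length l)%nat.
Proof. apply len_fm. intros [[p q] [r s]]; reflexivity. Qed.

Lemma Inv_step2 a b l : Inv a b l -> Inv a (S b) (step2 l).
Proof.
  intros [l' [E [F L]]]. subst l.
  exists (((0,1),(a,b))%nat :: step2 l'). split; [reflexivity|split].
  - constructor. simpl; lia.
    apply (Forall_flat_map (good a b)); auto.
    intros [[p q] [r s]] [H1 [H2 H3]]. constructor; [simpl; lia | constructor; [simpl; lia | constructor]].
  - cbn [length]. rewrite len_st2. replace (a + S b)%nat with (S (a + b)) by lia. rewrite Nat.pow_succ_r'. rewrite <- L. lia.
Qed.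

Lemma Inv_step1 a b l : Inv a b l -> Inv (S a) b (step1 l).
Proof.
  intros [l' [E [F L]]]. subst l.
  exists (((1,0),(a,b))%nat :: step1 l'). split; [reflexivity|split].
  - constructor. simpl; lia.
    apply (Forall_flat_map (good a b)); auto.
    intros [[p q] [r s]] [H1 [H2 H3]]. constructor; [simpl; lia | constructor; [simpl; lia | constructor]].
  - cbn [length]. rewrite len_st1. replace (S a + b)%nat with (S (a + b)) by lia. rewrite Nat.pow_succ_r'. rewrite <- L. lia.
Qed.

Lemma Inv_lstg a b : Inv a b (lstg a b l0).
Proof.
  unfold lstg. induction a as [|a IH]; simpl.
  - induction b as [|b IHb]; simpl.
    + exists []. split; [reflexivity|split]; auto.
    + apply Inv_step2; auto.
  - apply Inv_step1; auto.
Qed.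

Lemma fder f p q : smooth2 f -> (1 <= p + q)%nat ->
  (exists p', p = S p' /\ pdn p q f = pdn p' q (pd1 f)) \/
  (p = 0%nat /\ exists q', q = S q' /\ pdn p q f = pdn 0 q' (pd2 f)).
Proof.
  intros Hf Hpq. destruct p as [|p'].
  - right. split; auto. destruct q as [|q']. lia. exists q'. split; auto.
    rewrite pdn_pd2 by auto. reflexivity.
  - left. exists p'. split; auto. rewrite pdn_pd1 by auto. reflexivity.
Qed.

Lemma term_bound f h G p q r s s0 m NF1 NF2 NH1 NH2 NG :
  smooth2 f -> smooth2 h -> smooth2 G ->
  (1 <= p + q)%nat -> (p + q + r + s = s0)%nat -> (s0 <= 2*m+1)%nat ->
  sqrt (Hsq (m+1) (pd1 f)) <= NF1 -> sqrt (Hsq (m+1) (pd2 f)) <= NF1 ->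
  sqrt (Hsq (s0-1) (pd1 f)) <= NF2 -> sqrt (Hsq (s0-1) (pd2 f)) <= NF2 ->
  sqrt (Hsq (s0-1) h) <= NH1 -> sqrt (Hsq (m+2) h) <= NH2 -> sqrt (L2sq G) <= NG ->
  Rabs (intT2 (mul2 (term f h ((p,q),(r,s))%nat) G)) <= 6 * (NF1 * NH1 + NF2 * NH2) * NG.
Proof.
  intros Hf Hh HG Hpq Hs Hm F1a F1b F2a F2b H1 H2 HNG.
  assert (Sf1 : smooth2 (pd1 f)) by (apply smooth_pd1; auto).
  assert (Sf2 : smooth2 (pd2 f)) by (apply smooth_pd2; auto).
  pose proof (sqrt_pos (Hsq (m+1) (pd1 f))). pose proof (sqrt_pos (Hsq (s0-1) (pd1 f))).
  pose proof (sqrt_pos (Hsq (s0-1) h)). pose proof (sqrt_pos (Hsq (m+2) h)). pose proof (sqrt_pos (L2sq G)).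
  assert (0 <= NF1 * NH1) by (apply Rmult_le_pos; lra).
  assert (0 <= NF2 * NH2) by (apply Rmult_le_pos; lra).
  change (intT2 (mul2 (term f h ((p,q),(r,s))%nat) G)) with
    (intT2 (fun x y => pdn p q f x y * pdn r s h x y * G x y)).
  destruct (le_lt_dec (p + q) m) as [Lm|Gm].
  - assert (Bu : forall x y, -PI <= x <= PI -> -PI <= y <= PI -> Rabs (pdn p q f x y) <= 6 * NF1).
    { intros x y Hx Hy. destruct (fder f p q Hf Hpq) as [[p' [E1 E2]] | [E1 [q' [E2 E3]]]].
      - rewrite E2. eapply Rle_trans. apply (SobK (pd1 f) p' q (m+1)); auto. lia. lra.
      - rewrite E3. eapply Rle_trans. apply (SobK (pd2 f) 0 q' (m+1)); auto. lia. lra. }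
    eapply Rle_trans.
    + apply (holder _ _ _ (6 * NF1)); [apply smooth_pdn; auto | apply smooth_pdn; auto | auto | lra | auto].
    + assert (sqrt (L2sq (pdn r s h)) <= NH1).
      { eapply Rle_trans; [apply (sqrt_L2_le h r s (s0 - 1)); auto; lia | auto]. }
      pose proof (sqrt_pos (L2sq (pdn r s h))).
      assert (6 * NF1 * sqrt (L2sq (pdn r s h)) * sqrt (L2sq G) <= 6 * NF1 * NH1 * NG).
      { apply Rmult_le_compat; [nra | lra | apply Rmult_le_compat; nra | lra]. }
      nra.
  - assert (Bu : forall x y, -PI <= x <= PI -> -PI <= y <= PI -> Rabs (pdn r s h x y) <= 6 * NH2).
    { intros x y Hx Hy. eapply Rle_trans. apply (SobK h r s (m+2)); auto. lia. lra. }
    rewrite (intT2_ext _ (fun x y => pdn r s h x y * pdn p q f x y * G x y)) by (intros; ring).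
    eapply Rle_trans.
    + apply (holder _ _ _ (6 * NH2)); [apply smooth_pdn; auto | apply smooth_pdn; auto | auto | lra | auto].
    + assert (sqrt (L2sq (pdn p q f)) <= NF2).
      { destruct (fder f p q Hf Hpq) as [[p' [E1 E2]] | [E1 [q' [E2 E3]]]].
        - rewrite E2. eapply Rle_trans; [apply (sqrt_L2_le (pd1 f) p' q (s0 - 1)); auto; lia | auto].
        - rewrite E3. eapply Rle_trans; [apply (sqrt_L2_le (pd2 f) 0 q' (s0 - 1)); auto; lia | auto]. }
      pose proof (sqrt_pos (L2sq (pdn p q f))).
      assert (6 * NH2 * sqrt (L2sq (pdn p q f)) * sqrt (L2sq G) <= 6 * NH2 * NF2 * NG).
      { apply Rmult_le_compat; [nra | lra | apply Rmult_le_compat; nra | lra]. }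
      nra.
Qed.

Lemma tail_bound f h G l X : smooth2 f -> smooth2 h -> smooth2 G ->
  (forall t, In t l -> Rabs (intT2 (mul2 (term f h t) G)) <= X) ->
  Rabs (intT2 (mul2 (SumT f h l) G)) <= INR (length l) * X.
Proof.
  intros Hf Hh HG. induction l as [|t l IH]; intros Ht.
  - simpl. rewrite (intT2_ext _ (fun _ _ => 0)) by (intros; unfold mul2; simpl; ring).
    rewrite intT2_zero, Rabs_R0. lra.
  - assert (St : smooth2 (mul2 (term f h t) G)).
    { apply smooth_mul; auto. apply smooth_mul; apply smooth_pdn; auto. }
    assert (Sl : smooth2 (mul2 (SumT f h l) G)) by (apply smooth_mul; auto; apply smooth_SumT; auto).
    rewrite (intT2_ext _ (plus2 (mul2 (term f h t) G) (mul2 (SumT f h l) G)))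
      by (intros; cbv [mul2 plus2 SumT]; ring).
    rewrite (intT2_plus _ _ St Sl).
    pose proof (Ht t (or_introl eq_refl)).
    assert (Rabs (intT2 (mul2 (SumT f h l) G)) <= INR (length l) * X) by (apply IH; intros; apply Ht; right; auto).
    change (length (t :: l)) with (S (length l)). rewrite S_INR.
    pose proof (Rabs_triang (intT2 (mul2 (term f h t) G)) (intT2 (mul2 (SumT f h l) G))). lra.
Qed.

Lemma periodic_mul u v : periodic2 u -> periodic2 v -> periodic2 (mul2 u v).
Proof.
  intros Hu Hv x y. unfold mul2. destruct (Hu x y) as [A B]. destruct (Hv x y) as [C D].
  rewrite A, B, C, D. auto.
Qed.

Lemma top_id f1 f2 G : smooth2 f1 -> smooth2 f2 -> smooth2 G ->
  periodic2 f1 -> periodic2 f2 -> periodic2 G ->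
  intT2 (fun x y => (f1 x y * pd1 G x y + f2 x y * pd2 G x y) * G x y) =
  -(1/2) * intT2 (fun x y => divf f1 f2 x y * G x y * G x y).
Proof.
  intros S1 S2 SG P1 P2 PG.
  assert (SGG : smooth2 (mul2 G G)) by (apply smooth_mul; auto).
  set (F1 := mul2 f1 (mul2 G G)). set (F2 := mul2 f2 (mul2 G G)).
  assert (SF1 : smooth2 F1) by (apply smooth_mul; auto).
  assert (SF2 : smooth2 F2) by (apply smooth_mul; auto).
  assert (PF1 : periodic2 F1) by (apply periodic_mul; auto; apply periodic_mul; auto).
  assert (PF2 : periodic2 F2) by (apply periodic_mul; auto; apply periodic_mul; auto).
  set (D := mul2 (mul2 (plus2 (pd1 f1) (pd2 f2)) G) G).
  assert (SD : smooth2 D).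
  { apply smooth_mul; auto. apply smooth_mul; auto. apply smooth_plus. apply smooth_pd1; auto. apply smooth_pd2; auto. }
  assert (E1 : pd1 F1 = fun x y => pd1 f1 x y * (G x y * G x y) + f1 x y * (pd1 G x y * G x y + G x y * pd1 G x y)).
  { unfold F1. rewrite (pd1_mul f1 (mul2 G G) (smooth_reg f1 0 0 S1) (smooth_reg _ 0 0 SGG)).
    rewrite (pd1_mul G G (smooth_reg G 0 0 SG) (smooth_reg G 0 0 SG)). reflexivity. }
  assert (E2 : pd2 F2 = fun x y => pd2 f2 x y * (G x y * G x y) + f2 x y * (pd2 G x y * G x y + G x y * pd2 G x y)).
  { unfold F2. rewrite (pd2_mul f2 (mul2 G G) (smooth_reg f2 0 0 S2) (smooth_reg _ 0 0 SGG)).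
    rewrite (pd2_mul G G (smooth_reg G 0 0 SG) (smooth_reg G 0 0 SG)). reflexivity. }
  rewrite (intT2_ext _ (plus2 (scal2 (1/2) (pd1 F1)) (plus2 (scal2 (1/2) (pd2 F2)) (scal2 (-(1/2)) D)))).
  - assert (A1 : smooth2 (scal2 (1/2) (pd1 F1))) by (apply smooth_scal; apply smooth_pd1; auto).
    assert (A2 : smooth2 (scal2 (1/2) (pd2 F2))) by (apply smooth_scal; apply smooth_pd2; auto).
    assert (A3 : smooth2 (scal2 (-(1/2)) D)) by (apply smooth_scal; auto).
    rewrite (intT2_plus _ _ A1 (smooth_plus _ _ A2 A3)).
    rewrite (intT2_plus _ _ A2 A3).
    rewrite (intT2_scal _ _ (smooth_pd1 _ SF1)), (intT2_scal _ _ (smooth_pd2 _ SF2)), (intT2_scal _ _ SD).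
    rewrite intT2_pd1_0, intT2_pd2_0 by auto.
    change (intT2 D) with (intT2 (fun x y => divf f1 f2 x y * G x y * G x y)). ring.
  - intros x y. change (plus2 (scal2 (1/2) (pd1 F1)) (plus2 (scal2 (1/2) (pd2 F2)) (scal2 (-(1/2)) D)) x y) with (1/2 * pd1 F1 x y + (1/2 * pd2 F2 x y + -(1/2) * D x y)). rewrite E1, E2.
    unfold D, mul2, plus2. field.
Qed.

Lemma smooth_adv f1 f2 g : smooth2 f1 -> smooth2 f2 -> smooth2 g -> smooth2 (adv f1 f2 g).
Proof.
  intros. change (adv f1 f2 g) with (plus2 (mul2 f1 (pd1 g)) (mul2 f2 (pd2 g))).
  apply smooth_plus; apply smooth_mul; auto. apply smooth_pd1; auto. apply smooth_pd2; auto.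
Qed.

Lemma comp_bound a b s0 m f1 f2 g NF1a NF2a NH1a NH2a NF1b NF2b NH1b NH2b NG :
  (a + b = s0)%nat -> (s0 <= 2*m+1)%nat ->
  smooth2 f1 -> smooth2 f2 -> smooth2 g -> periodic2 f1 -> periodic2 f2 -> periodic2 g ->
  sqrt (Hsq (m+1) (pd1 f1)) <= NF1a -> sqrt (Hsq (m+1) (pd2 f1)) <= NF1a ->
  sqrt (Hsq (s0-1) (pd1 f1)) <= NF2a -> sqrt (Hsq (s0-1) (pd2 f1)) <= NF2a ->
  sqrt (Hsq (s0-1) (pd1 g)) <= NH1a -> sqrt (Hsq (m+2) (pd1 g)) <= NH2a ->
  sqrt (Hsq (m+1) (pd1 f2)) <= NF1b -> sqrt (Hsq (m+1) (pd2 f2)) <= NF1b ->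
  sqrt (Hsq (s0-1) (pd1 f2)) <= NF2b -> sqrt (Hsq (s0-1) (pd2 f2)) <= NF2b ->
  sqrt (Hsq (s0-1) (pd2 g)) <= NH1b -> sqrt (Hsq (m+2) (pd2 g)) <= NH2b ->
  sqrt (L2sq (pdn a b g)) <= NG ->
  Rabs (intT2 (mul2 (pdn a b (adv f1 f2 g)) (pdn a b g))) <=
    2 ^ s0 * (6 * (NF1a * NH1a + NF2a * NH2a) * NG) + 2 ^ s0 * (6 * (NF1b * NH1b + NF2b * NH2b) * NG)
    + sqrt (Hsq 2 (divf f1 f2)) * L2sq (pdn a b g).
Proof.
  intros Hab Hm Sf1 Sf2 Sg Pf1 Pf2 Pg a1 a2 a3 a4 a5 a6 b1 b2 b3 b4 b5 b6 HG.
  set (G := pdn a b g) in *.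
  assert (SG : smooth2 G) by (apply smooth_pdn; auto).
  assert (PG : periodic2 G) by (apply periodic_pdn; auto).
  assert (Sg1 : smooth2 (pd1 g)) by (apply smooth_pd1; auto).
  assert (Sg2 : smooth2 (pd2 g)) by (apply smooth_pd2; auto).
  destruct (Inv_lstg a b) as [l' [El [Fl Ll]]].
  assert (EP : pdn a b (adv f1 f2 g) =
     plus2 (plus2 (mul2 f1 (pd1 G)) (SumT f1 (pd1 g) l')) (plus2 (mul2 f2 (pd2 G)) (SumT f2 (pd2 g) l'))).
  { change (adv f1 f2 g) with (plus2 (mul2 f1 (pd1 g)) (mul2 f2 (pd2 g))).
    rewrite pdn_plus by (apply smooth_mul; auto).
    rewrite (pdn_mul a b f1 (pd1 g) Sf1 Sg1), (pdn_mul a b f2 (pd2 g) Sf2 Sg2), El.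
    change (SumT f1 (pd1 g) (((0,0),(a,b))%nat :: l')) with
      (plus2 (mul2 (pdn 0 0 f1) (pdn a b (pd1 g))) (SumT f1 (pd1 g) l')).
    change (SumT f2 (pd2 g) (((0,0),(a,b))%nat :: l')) with
      (plus2 (mul2 (pdn 0 0 f2) (pdn a b (pd2 g))) (SumT f2 (pd2 g) l')).
    rewrite (pdn_pd1 a b g Sg), (pdn_pd2 a b g Sg). unfold G. rewrite (pd2_pdn a b g Sg). reflexivity. }
  assert (ST1 : smooth2 (mul2 (SumT f1 (pd1 g) l') G)) by (apply smooth_mul; auto; apply smooth_SumT; auto).
  assert (ST2 : smooth2 (mul2 (SumT f2 (pd2 g) l') G)) by (apply smooth_mul; auto; apply smooth_SumT; auto).
  set (Top := fun x y => (f1 x y * pd1 G x y + f2 x y * pd2 G x y) * G x y).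
  assert (STop : smooth2 Top).
  { change Top with (mul2 (adv f1 f2 G) G). apply smooth_mul; auto. apply smooth_adv; auto. }
  rewrite EP.
  rewrite (intT2_ext _ (plus2 (plus2 (mul2 (SumT f1 (pd1 g) l') G) (mul2 (SumT f2 (pd2 g) l') G)) Top))
    by (intros; unfold Top; cbv [plus2 mul2]; ring).
  rewrite (intT2_plus _ _ (smooth_plus _ _ ST1 ST2) STop), (intT2_plus _ _ ST1 ST2).
  assert (HL : INR (length l') <= 2 ^ s0).
  { rewrite <- Hab. assert (I2 : INR 2 = 2) by (simpl; lra). rewrite <- I2, <- pow_INR. apply le_INR. lia. }
  assert (NGp : 0 <= NG) by (pose proof (sqrt_pos (L2sq G)); lra).
  assert (X1p : 0 <= 6 * (NF1a * NH1a + NF2a * NH2a) * NG).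
  { pose proof (sqrt_pos (Hsq (m+1) (pd1 f1))). pose proof (sqrt_pos (Hsq (s0-1) (pd1 f1))).
    pose proof (sqrt_pos (Hsq (s0-1) (pd1 g))). pose proof (sqrt_pos (Hsq (m+2) (pd1 g))).
    assert (0 <= NF1a * NH1a) by (apply Rmult_le_pos; lra). assert (0 <= NF2a * NH2a) by (apply Rmult_le_pos; lra).
    apply Rmult_le_pos; lra. }
  assert (X2p : 0 <= 6 * (NF1b * NH1b + NF2b * NH2b) * NG).
  { pose proof (sqrt_pos (Hsq (m+1) (pd1 f2))). pose proof (sqrt_pos (Hsq (s0-1) (pd1 f2))).
    pose proof (sqrt_pos (Hsq (s0-1) (pd2 g))). pose proof (sqrt_pos (Hsq (m+2) (pd2 g))).
    assert (0 <= NF1b * NH1b) by (apply Rmult_le_pos; lra). assert (0 <= NF2b * NH2b) by (apply Rmult_le_pos; lra).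
    apply Rmult_le_pos; lra. }
  assert (T1 : Rabs (intT2 (mul2 (SumT f1 (pd1 g) l') G)) <= INR (length l') * (6 * (NF1a * NH1a + NF2a * NH2a) * NG)).
  { apply tail_bound; auto. intros [[p q] [r s]] Ht.
    rewrite Forall_forall in Fl. destruct (Fl _ Ht) as [E1 [E2 E3]].
    apply (term_bound f1 (pd1 g) G p q r s s0 m); auto. lia. }
  assert (T2 : Rabs (intT2 (mul2 (SumT f2 (pd2 g) l') G)) <= INR (length l') * (6 * (NF1b * NH1b + NF2b * NH2b) * NG)).
  { apply tail_bound; auto. intros [[p q] [r s]] Ht.
    rewrite Forall_forall in Fl. destruct (Fl _ Ht) as [E1 [E2 E3]].
    apply (term_bound f2 (pd2 g) G p q r s s0 m); auto. lia. }
  assert (T3 : Rabs (intT2 Top) <= sqrt (Hsq 2 (divf f1 f2)) * L2sq G).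
  { unfold Top. rewrite top_id by auto.
    assert (Sd : smooth2 (divf f1 f2)).
    { change (divf f1 f2) with (plus2 (pd1 f1) (pd2 f2)). apply smooth_plus. apply smooth_pd1; auto. apply smooth_pd2; auto. }
    pose proof (sqrt_pos (Hsq 2 (divf f1 f2))).
    pose proof (holder (divf f1 f2) G G (2 * sqrt (Hsq 2 (divf f1 f2))) Sd SG SG ltac:(lra)
       (fun x y Hx Hy => sob_abs (divf f1 f2) x y Sd Hx Hy)) as Hh.
    rewrite Rmult_assoc, sqrt_sqrt in Hh by (apply L2sq_nonneg; auto).
    rewrite Rabs_mult. replace (Rabs (-(1/2))) with (1/2) by (rewrite Rabs_Ropp, Rabs_pos_eq; lra).
    lra. }
  pose proof (Rabs_triang (intT2 (mul2 (SumT f1 (pd1 g) l') G) + intT2 (mul2 (SumT f2 (pd2 g) l') G)) (intT2 Top)).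
  pose proof (Rabs_triang (intT2 (mul2 (SumT f1 (pd1 g) l') G)) (intT2 (mul2 (SumT f2 (pd2 g) l') G))).
  assert (INR (length l') * (6 * (NF1a * NH1a + NF2a * NH2a) * NG) <= 2 ^ s0 * (6 * (NF1a * NH1a + NF2a * NH2a) * NG))
    by (apply Rmult_le_compat_r; auto).
  assert (INR (length l') * (6 * (NF1b * NH1b + NF2b * NH2b) * NG) <= 2 ^ s0 * (6 * (NF1b * NH1b + NF2b * NH2b) * NG))
    by (apply Rmult_le_compat_r; auto).
  lra.
Qed.

Theorem lemma2p2 :
  forall s0 : nat, (1 <= s0)%nat ->
  exists C : R,
  forall (a b : nat), (a + b = s0)%nat ->
  forall f1 f2 g1 g2 : fn2,
    smooth_T2 f1 -> smooth_T2 f2 -> smooth_T2 g1 -> smooth_T2 g2 ->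
    let m := (s0 / 2)%nat in
    let gd := Hdotnorm2 s0 g1 g2 in
    Rabs (trilin a b f1 f2 g1 g2) <=
    C * ( (Hnorm2 (m + 1) (pd1 f1) (pd2 f1) * Hnorm2 (s0 - 1) (pd1 g1) (pd1 g2)
           + Hnorm2 (m + 1) (pd1 f2) (pd2 f2) * Hnorm2 (s0 - 1) (pd2 g1) (pd2 g2)) * gd
        + (Hnorm2 (s0 - 1) (pd1 f1) (pd2 f1) * Hnorm2 (m + 2) (pd1 g1) (pd1 g2)
           + Hnorm2 (s0 - 1) (pd1 f2) (pd2 f2) * Hnorm2 (m + 2) (pd2 g1) (pd2 g2)) * gd
        + Hnorm1 2 (divf f1 f2) * gd ^ 2 ).
Proof.
  intros s0 Hs0. exists (12 * 2 ^ s0 + 1).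
  intros a b Hab f1 f2 g1 g2 [Sf1 Pf1] [Sf2 Pf2] [Sg1 Pg1] [Sg2 Pg2] m gd.
  assert (Hm : (s0 <= 2 * m + 1)%nat) by (unfold m; pose proof (m_bound s0); lia).
  assert (Sp1f1 : smooth2 (pd1 f1)) by (apply smooth_pd1; auto).
  assert (Sp2f1 : smooth2 (pd2 f1)) by (apply smooth_pd2; auto).
  assert (Sp1f2 : smooth2 (pd1 f2)) by (apply smooth_pd1; auto).
  assert (Sp2f2 : smooth2 (pd2 f2)) by (apply smooth_pd2; auto).
  assert (Sp1g1 : smooth2 (pd1 g1)) by (apply smooth_pd1; auto).
  assert (Sp2g1 : smooth2 (pd2 g1)) by (apply smooth_pd2; auto).
  assert (Sp1g2 : smooth2 (pd1 g2)) by (apply smooth_pd1; auto).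
  assert (Sp2g2 : smooth2 (pd2 g2)) by (apply smooth_pd2; auto).
  set (NF1a := Hnorm2 (m + 1) (pd1 f1) (pd2 f1)).
  set (NF2a := Hnorm2 (s0 - 1) (pd1 f1) (pd2 f1)).
  set (NH1a := Hnorm2 (s0 - 1) (pd1 g1) (pd1 g2)).
  set (NH2a := Hnorm2 (m + 2) (pd1 g1) (pd1 g2)).
  set (NF1b := Hnorm2 (m + 1) (pd1 f2) (pd2 f2)).
  set (NF2b := Hnorm2 (s0 - 1) (pd1 f2) (pd2 f2)).
  set (NH1b := Hnorm2 (s0 - 1) (pd2 g1) (pd2 g2)).
  set (NH2b := Hnorm2 (m + 2) (pd2 g1) (pd2 g2)).
  set (Nd := Hnorm1 2 (divf f1 f2)).
  assert (HD1 : Hdotsq s0 g1 >= 0) by (pose proof (Hdotsq_nonneg s0 g1 Sg1); lra).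
  assert (HD2 : Hdotsq s0 g2 >= 0) by (pose proof (Hdotsq_nonneg s0 g2 Sg2); lra).
  assert (G1b : sqrt (L2sq (pdn a b g1)) <= gd).
  { unfold gd, Hdotnorm2. apply sqrt_le_1_alt. replace b with (s0 - a)%nat by lia.
    pose proof (L2_le_Hdot g1 a s0 Sg1 ltac:(lia)). lra. }
  assert (G2b : sqrt (L2sq (pdn a b g2)) <= gd).
  { unfold gd, Hdotnorm2. apply sqrt_le_1_alt. replace b with (s0 - a)%nat by lia.
    pose proof (L2_le_Hdot g2 a s0 Sg2 ltac:(lia)). lra. }
  assert (GG : L2sq (pdn a b g1) + L2sq (pdn a b g2) <= gd ^ 2).
  { unfold gd, Hdotnorm2. rewrite pow2_sqrt by lra. replace b with (s0 - a)%nat by lia.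
    pose proof (L2_le_Hdot g1 a s0 Sg1 ltac:(lia)). pose proof (L2_le_Hdot g2 a s0 Sg2 ltac:(lia)). lra. }
  assert (C1 := comp_bound a b s0 m f1 f2 g1 NF1a NF2a NH1a NH2a NF1b NF2b NH1b NH2b gd Hab Hm
     Sf1 Sf2 Sg1 Pf1 Pf2 Pg1
     (Hnorm2_ge1 _ _ _ Sp1f1 Sp2f1) (Hnorm2_ge2 _ _ _ Sp1f1 Sp2f1)
     (Hnorm2_ge1 _ _ _ Sp1f1 Sp2f1) (Hnorm2_ge2 _ _ _ Sp1f1 Sp2f1)
     (Hnorm2_ge1 _ _ _ Sp1g1 Sp1g2) (Hnorm2_ge1 _ _ _ Sp1g1 Sp1g2)
     (Hnorm2_ge1 _ _ _ Sp1f2 Sp2f2) (Hnorm2_ge2 _ _ _ Sp1f2 Sp2f2)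
     (Hnorm2_ge1 _ _ _ Sp1f2 Sp2f2) (Hnorm2_ge2 _ _ _ Sp1f2 Sp2f2)
     (Hnorm2_ge1 _ _ _ Sp2g1 Sp2g2) (Hnorm2_ge1 _ _ _ Sp2g1 Sp2g2) G1b).
  assert (C2 := comp_bound a b s0 m f1 f2 g2 NF1a NF2a NH1a NH2a NF1b NF2b NH1b NH2b gd Hab Hm
     Sf1 Sf2 Sg2 Pf1 Pf2 Pg2
     (Hnorm2_ge1 _ _ _ Sp1f1 Sp2f1) (Hnorm2_ge2 _ _ _ Sp1f1 Sp2f1)
     (Hnorm2_ge1 _ _ _ Sp1f1 Sp2f1) (Hnorm2_ge2 _ _ _ Sp1f1 Sp2f1)
     (Hnorm2_ge2 _ _ _ Sp1g1 Sp1g2) (Hnorm2_ge2 _ _ _ Sp1g1 Sp1g2)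
     (Hnorm2_ge1 _ _ _ Sp1f2 Sp2f2) (Hnorm2_ge2 _ _ _ Sp1f2 Sp2f2)
     (Hnorm2_ge1 _ _ _ Sp1f2 Sp2f2) (Hnorm2_ge2 _ _ _ Sp1f2 Sp2f2)
     (Hnorm2_ge2 _ _ _ Sp2g1 Sp2g2) (Hnorm2_ge2 _ _ _ Sp2g1 Sp2g2) G2b).
  assert (Etr : trilin a b f1 f2 g1 g2 =
     intT2 (mul2 (pdn a b (adv f1 f2 g1)) (pdn a b g1)) + intT2 (mul2 (pdn a b (adv f1 f2 g2)) (pdn a b g2))).
  { unfold trilin. rewrite <- intT2_plus.
    - reflexivity.
    - apply smooth_mul; apply smooth_pdn; auto. apply smooth_adv; auto.
    - apply smooth_mul; apply smooth_pdn; auto. apply smooth_adv; auto. }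
  rewrite Etr.
  pose proof (Rabs_triang (intT2 (mul2 (pdn a b (adv f1 f2 g1)) (pdn a b g1)))
                          (intT2 (mul2 (pdn a b (adv f1 f2 g2)) (pdn a b g2)))).
  change (sqrt (Hsq 2 (divf f1 f2))) with Nd in C1, C2.
  assert (nn : forall k u v, 0 <= Hnorm2 k u v) by (intros; unfold Hnorm2; apply sqrt_pos).
  assert (0 <= NF1a) by apply nn. assert (0 <= NF2a) by apply nn. assert (0 <= NH1a) by apply nn.
  assert (0 <= NH2a) by apply nn. assert (0 <= NF1b) by apply nn. assert (0 <= NF2b) by apply nn.
  assert (0 <= NH1b) by apply nn. assert (0 <= NH2b) by apply nn.
  assert (0 <= Nd) by (unfold Nd, Hnorm1; apply sqrt_pos).
  assert (0 <= gd) by (unfold gd, Hdotnorm2; apply sqrt_pos).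
  assert (P2 : 0 < 2 ^ s0) by (apply pow_lt; lra).
  set (A1 := NF1a * NH1a). set (B1 := NF2a * NH2a). set (A2 := NF1b * NH1b). set (B2 := NF2b * NH2b).
  assert (0 <= A1) by (apply Rmult_le_pos; auto). assert (0 <= B1) by (apply Rmult_le_pos; auto).
  assert (0 <= A2) by (apply Rmult_le_pos; auto). assert (0 <= B2) by (apply Rmult_le_pos; auto).
  set (P := (A1 + A2) * gd + (B1 + B2) * gd).
  assert (0 <= P) by (unfold P; apply Rplus_le_le_0_compat; apply Rmult_le_pos; lra).
  assert (0 <= Nd * gd ^ 2) by (apply Rmult_le_pos; auto; apply pow2_ge_0).
  assert (Nd * (L2sq (pdn a b g1) + L2sq (pdn a b g2)) <= Nd * gd ^ 2) by (apply Rmult_le_compat_l; auto).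
  assert (E : 2 ^ s0 * (6 * (A1 + B1) * gd) + 2 ^ s0 * (6 * (A2 + B2) * gd) = 6 * 2 ^ s0 * P) by (unfold P; ring).
  assert (12 * 2 ^ s0 * P + Nd * gd ^ 2 <= (12 * 2 ^ s0 + 1) * (P + Nd * gd ^ 2)).
  { assert (0 <= 12 * 2 ^ s0 * (Nd * gd ^ 2)) by (apply Rmult_le_pos; lra). nra. }
  fold A1 B1 A2 B2 in C1, C2. fold P.
  lra.
Qed.
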